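(* Let $p$ be a prime with $p\notin\{2,3,7,43\}$. Then $\{p,2p,6p,42p,1806p\}\subseteq\mathcal{M}_p^{(1)}$.
   Context: For positive integers $k,n$ let $S_k(n)=\sum_{i=1}^{n} i^k$. For an integer $a$, $\mathcal{M}_a$ denotes the set of positive integers $n$ such that $S_n(n)\equiv a\pmod{n}$. For a prime $p$, $\mathcal{M}_p^{(1)}=\{n\in\mathcal{M}_p : p\mid n,\ p^2\nmid n\}$. *)

(* Defs.v *)
From mathcomp Require Import all_boot.
Set Implicit Arguments. Unset Strict Implicit. Unset Printing Implicit Defensive.

Definition S (k n : nat) : nat := \sum_(1 <= i < n.+1) i ^ k.

Definition inM (a n : nat) : Prop := 0 < n /\ S n n = a %[mod n].

Definition inM1 (p n : nat) : Prop := inM p n /\ p %| n /\ ~~ (p ^ 2 %| n).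

(* Main.v *)
Require Import Defs.
From mathcomp Require Import all_boot all_order all_algebra all_field.
Import GRing.Theory.
Local Open Scope ring_scope.

Lemma Fp_eq_mod q a b : prime q -> (a%:R : 'F_q) = b%:R -> (a = b %[mod q])%N.
Proof. by move=> pq E; rewrite -(val_Fp_nat pq a) -(val_Fp_nat pq b) E. Qed.

Lemma sum_Fp_ord q k : prime q ->
  \sum_(x : 'F_q) x ^+ k = \sum_(i < q) (i%:R : 'F_q) ^+ k.
Proof.
move=> pq.
have inj : injective (fun i : 'I_q => (i%:R : 'F_q)).
  move=> i j /(@Fp_eq_mod q _ _ pq); rewrite !modn_small ?ltn_ord // => /val_inj.
  done.
have bij := inj_card_bij inj.
rewrite (reindex (fun i : 'I_q => (i%:R : 'F_q))) //.
apply: onW_bij; apply: bij; by rewrite card_Fp // card_ord.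
Qed.

Lemma shift_sum q k : prime q ->
  \sum_(0 <= i < q) ((i.+1)%:R : 'F_q) ^+ k = \sum_(x : 'F_q) x ^+ k.
Proof.
move=> pq; rewrite sum_Fp_ord // -(big_mkord xpredT (fun i => (i%:R : 'F_q) ^+ k)).
apply: (@addrI _ ((0%:R : 'F_q) ^+ k)).
rewrite -(big_nat_recl _ _ (fun i => (i%:R : 'F_q) ^+ k)) // big_nat_recr //=.
by rewrite pchar_Fp_0 // addrC.
Qed.

Lemma block q m k : prime q ->
  \sum_(0 <= i < m * q) ((i.+1)%:R : 'F_q) ^+ k = m%:R * \sum_(x : 'F_q) x ^+ k.
Proof.
move=> pq; elim: m => [|m IH]; first by rewrite mul0n big_geq // mul0r.
rewrite mulSn (@big_cat_nat _ _ _ q) ?leq_addr //=.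
have -> : \sum_(q <= i < q + m * q) ((i.+1)%:R : 'F_q) ^+ k
   = \sum_(0 <= i < m * q) ((i + q).+1%:R : 'F_q) ^+ k.
  have := big_addn 0 (q + m * q) q xpredT (fun i => ((i.+1)%:R : 'F_q) ^+ k).
  by rewrite add0n addKn.
rewrite shift_sum //.
have -> : \sum_(0 <= i < m * q) ((i + q).+1%:R : 'F_q) ^+ k
   = \sum_(0 <= i < m * q) ((i.+1)%:R : 'F_q) ^+ k.
  apply: eq_bigr => i _; by rewrite -addSn natrD pchar_Fp_0 // addr0.
by rewrite IH -nat1r mulrDl mul1r.
Qed.

Lemma key q n : prime q -> (q %| n)%N ->
  ((S n n)%:R : 'F_q) = (n %/ q)%:R * \sum_(x : 'F_q) x ^+ n.
Proof.
move=> pq qn; rewrite /S natr_sum.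
under eq_bigr => i _ do rewrite natrX.
rewrite big_add1 /=.
rewrite -{1}(divnK qn) block //.
Qed.

Lemma Fp_fermat q (x : 'F_q) : prime q -> x != 0 -> x ^+ q.-1 = 1.
Proof.
move=> pq xnz; have := expf_card x; rewrite card_Fp // => h0.
have h : x * x ^+ q.-1 = x by rewrite -exprS prednK ?prime_gt0.
by apply: (mulfI xnz); rewrite mulr1.
Qed.

Lemma sum_fermat q k : prime q -> (0 < k)%N -> (q.-1 %| k)%N ->
  \sum_(x : 'F_q) x ^+ k = (q.-1)%:R.
Proof.
move=> pq k0 dk; rewrite (bigD1 0) //= expr0n (gtn_eqF k0) add0r.
have -> : \sum_(i : 'F_q | i != 0) i ^+ k = \sum_(i : 'F_q | i != 0) 1.
  by apply: eq_bigr => x xnz; rewrite -(divnK dk) mulnC exprM Fp_fermat // expr1n.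
by rewrite sumr_const cardC1 card_Fp.
Qed.

Lemma sum_zero q k : prime q -> ~~ (q.-1 %| k)%N -> \sum_(x : 'F_q) x ^+ k = 0.
Proof.
move=> pq hk.
have [g gnz gk] : exists2 g : 'F_q, g != 0 & g ^+ k != 1.
  case: (pickP [pred g : 'F_q | (g != 0) && (g ^+ k != 1)]) => [g /andP[]|H];
    first by exists g.
  exfalso.
  have r0 : (0 < k %% q.-1)%N by rewrite lt0n.
  have d0 : (0 < q.-1)%N by rewrite -subn1 subn_gt0 prime_gt1.
  have rlt : (k %% q.-1 < q.-1)%N by rewrite ltn_pmod.
  have := @max_unity_roots _ (k %% q.-1) (enum [pred x : 'F_q | x != 0]) r0 _ (enum_uniq _).
  rewrite -cardE cardC1 card_Fp // leqNgt rlt => h; suff: false by []; apply: h.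
  apply/allP => x; rewrite mem_enum unity_rootE inE => xnz.
  have := H x; rewrite /= xnz /= => /negbT; rewrite negbK => /eqP.
  rewrite {1}(divn_eq k q.-1) exprD mulnC exprM Fp_fermat // expr1n mul1r => ->.
  by [].
have E : \sum_(x : 'F_q) x ^+ k = g ^+ k * \sum_(x : 'F_q) x ^+ k.
  rewrite {1}(reindex_inj (mulfI gnz)) /= mulr_sumr; apply: eq_bigr => x _.
  by rewrite exprMn.
apply/eqP; move: E => /eqP; rewrite -subr_eq0 -{1}(mul1r (\sum_x _)) -mulrBl mulf_eq0.
by rewrite subr_eq0 eq_sym (negbTE gk).
Qed.

Lemma mod_Fp_eq q a b : prime q -> (a = b %[mod q])%N -> (a%:R : 'F_q) = b%:R.
Proof. by move=> pq E; rewrite -(Fp_nat_mod pq a) E Fp_nat_mod. Qed.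

Lemma small_q q k p : (0 < p)%N -> prime q -> (0 < k)%N -> (q %| k)%N -> (q.-1 %| k)%N ->
  (k %/ q * q.-1 == 1 %[mod q])%N -> (S (k * p) (k * p) = p %[mod q])%N.
Proof.
move=> p0 pq k0 qk dk /eqP h.
have qn : (q %| k * p)%N by apply: dvdn_mulr.
apply: (@Fp_eq_mod q _ _ pq).
rewrite key // sum_fermat ?muln_gt0 ?k0 ?p0 ?dvdn_mulr // -natrM.
apply: mod_Fp_eq => //.
rewrite -{1}(divnK qk) mulnAC mulnK ?prime_gt0 // mulnAC.
by rewrite -modnMml h modnMml mul1n.
Qed.

Lemma p_part p k : prime p -> ~~ (p.-1 %| k * p)%N -> (S (k * p) (k * p) = p %[mod p])%N.
Proof.
move=> pp hk; apply: (@Fp_eq_mod p _ _ pp).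
by rewrite key ?dvdn_mull // sum_zero // mulr0 pchar_Fp_0.
Qed.

Lemma div1806 : divisors 1806 = [:: 1;2;3;6;7;14;21;42;43;86;129;258;301;602;903;1806]%N.
Proof. by vm_compute. Qed.

Lemma chk1 : all (fun d => prime d ==> (d \in [:: 2;3;7;43]%N)) (divisors 1806).
Proof. by rewrite div1806; vm_compute. Qed.

Lemma chk2 : all (fun d => prime d.+1 ==> (d.+1 \in [:: 2;3;7;43]%N)) (divisors 1806).
Proof. by rewrite div1806; vm_compute. Qed.

Lemma not_div p k : prime p -> p \notin [:: 2;3;7;43]%N -> (k %| 1806)%N ->
  ~~ (p %| k)%N /\ ~~ (p.-1 %| k)%N.
Proof.
move=> pp hp kd; split; apply/negP => h.
  have : (p \in divisors 1806) by rewrite -dvdn_divisors // (dvdn_trans h kd).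
  by move/(allP chk1); rewrite pp /= (negbTE hp).
have : (p.-1 \in divisors 1806) by rewrite -dvdn_divisors // (dvdn_trans h kd).
by move/(allP chk2); rewrite prednK ?prime_gt0 // pp /= (negbTE hp).
Qed.

Lemma crt m1 m2 a b : coprime m1 m2 -> (a = b %[mod m1])%N -> (a = b %[mod m2])%N ->
  (a = b %[mod m1 * m2])%N.
Proof. by move=> c h1 h2; apply/eqP; rewrite chinese_remainder // h1 h2 !eqxx. Qed.

Lemma finish p k : prime p -> p \notin [:: 2;3;7;43]%N -> (0 < k)%N -> (k %| 1806)%N ->
  (S (k * p) (k * p) = p %[mod k])%N -> inM1 p (k * p).
Proof.
move=> pp hp k0 kd hk.
have [npk np1k] := @not_div p k pp hp kd.
split; [split|split].
- by rewrite muln_gt0 k0 prime_gt0.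
- apply: crt => //; first by rewrite coprime_sym prime_coprime.
  apply: p_part => //; rewrite Gauss_dvdl // coprimePn // prime_gt0 //.
- exact: dvdn_mull.
- by rewrite -mulnn dvdn_pmul2r ?prime_gt0.
Qed.

Theorem mainTheorem17 (p : nat) :
  prime p -> p \notin [:: 2; 3; 7; 43] ->
  forall n, n \in [:: p; 2 * p; 6 * p; 42 * p; 1806 * p] -> inM1 p n.
Proof.
move=> pp hp n; rewrite !inE => /orP[/eqP->|/orP[/eqP->|/orP[/eqP->|/orP[/eqP->|/eqP->]]]].
- rewrite -{2}[p]mul1n; apply: finish => //; by rewrite !modn1.
- apply: finish => //; exact: small_q (prime_gt0 pp) _ _ _ _ _.
- apply: finish => //; apply: (@crt 2 3) => //; exact: small_q (prime_gt0 pp) _ _ _ _ _.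
- apply: finish => //; apply: (@crt 2 (3 * 7)) => //; first exact: small_q (prime_gt0 pp) _ _ _ _ _.
  apply: (@crt 3 7) => //; exact: small_q (prime_gt0 pp) _ _ _ _ _.
- apply: finish => //; apply: (@crt 2 (3 * (7 * 43))) => //; first exact: small_q (prime_gt0 pp) _ _ _ _ _.
  apply: (@crt 3 (7 * 43)) => //; first exact: small_q (prime_gt0 pp) _ _ _ _ _.
  apply: (@crt 7 43) => //; exact: small_q (prime_gt0 pp) _ _ _ _ _.
Qed.
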